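(* Let $(A,+,\circ)$ be a finite left brace of odd order with cyclic additive group and with $(A,\circ)$ a Z-group. Then every uniconnected associated cycle set $X$ of $A$ has odd size and $\mathcal{G}(X)$ is a Z-group. Conversely, every finite uniconnected cycle set of odd size whose permutation group is a Z-group is isomorphic to a uniconnected associated cycle set of such a left brace.
   Context: A left brace is a set $A$ with $(A,+)$ abelian group, $(A,\circ)$ group, $a\circ(b+c)=a\circ b-a+a\circ c$; $\lambda_a(b):=-a+a\circ b$, and $a\mapsto\lambda_a$ is a homomorphism $(A,\circ)\to\mathrm{Aut}(A,+)$. A transitive cycle base is a single orbit of this action generating $(A,+)$. A uniconnected associated cycle set of $A$ is $(A,\bullet)$, $a\bullet b:=\lambda_a(g)^{-}\circ b$ ($^{-}$ = inverse in $(A,\circ)$), for $g$ in a transitive cycle base. A cycle set: each $\sigma_x:y\mapsto x\cdot y$ bijective, $(x\cdot y)\cdot(x\cdot z)=(y\cdot x)\cdot(y\cdot z)$, squaring bijective; $\mathcal{G}(X)$ is generated by the $\sigma_x$; $X$ is uniconnected if $\mathcal{G}(X)$ acts regularly. A Z-group is a finite group all of whose Sylow subgroups are cyclic. *)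

(* Defs.v *)
From mathcomp Require Import all_boot all_fingroup all_solvable.
Set Implicit Arguments. Unset Strict Implicit. Unset Printing Implicit Defensive.
Local Open Scope group_scope.

(* A finite left brace: the multiplicative group (A,o) is the finGroupType gT
   (o = group product, ^- = group inverse), and the additive structure
   (A,+) is given by explicit operations add/opp/zero on the same carrier. *)
Definition is_left_brace (gT : finGroupType)
  (add : gT -> gT -> gT) (opp : gT -> gT) (zero : gT) : Prop :=
  [/\ (forall a b c, add a (add b c) = add (add a b) c),
      (forall a b, add a b = add b a),
      (forall a, add zero a = a),
      (forall a, add (opp a) a = zero)
    & (forall a b c, a * add b c = add (add (a * b) (opp a)) (a * c))].

Definition add_cyclic (gT : finGroupType) (add : gT -> gT -> gT) (zero : gT) : Prop :=
  exists c : gT, forall a : gT, exists n : nat, a = iter n (add c) zero.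

Definition blam (gT : finGroupType) (add : gT -> gT -> gT) (opp : gT -> gT)
  (a b : gT) : gT := add (opp a) (a * b).

Definition add_generates (gT : finGroupType) (add : gT -> gT -> gT)
  (opp : gT -> gT) (zero : gT) (S : {set gT}) : Prop :=
  forall H : {set gT},
    zero \in H -> (forall a b, a \in H -> b \in H -> add a b \in H) ->
    (forall a, a \in H -> opp a \in H) -> S \subset H -> H = [set: gT].

(* g lies in a transitive cycle base: its lambda-orbit generates (A,+) *)
Definition in_trans_cycle_base (gT : finGroupType) (add : gT -> gT -> gT)
  (opp : gT -> gT) (zero : gT) (g : gT) : Prop :=
  add_generates add opp zero [set blam add opp a g | a in gT].

Definition assoc_op (gT : finGroupType) (add : gT -> gT -> gT) (opp : gT -> gT)
  (g : gT) (a b : gT) : gT := (blam add opp a g)^-1 * b.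

Definition is_cycle_set (X : finType) (op : X -> X -> X) : Prop :=
  [/\ (forall x, bijective (op x)),
      (forall x y z, op (op x y) (op x z) = op (op y x) (op y z))
    & bijective (fun x => op x x)].

Definition sigma_set (X : finType) (op : X -> X -> X) : {set {perm X}} :=
  [set s : {perm X} | [exists x, [forall y, s y == op x y]]].

Definition permG (X : finType) (op : X -> X -> X) : {set {perm X}} :=
  <<sigma_set op>>.

Definition uniconnected (X : finType) (op : X -> X -> X) : Prop :=
  forall x y : X, exists! s : {perm X}, s \in permG op /\ s x = y.

(* Main.v *)
From HB Require Import structures.
Require Import Defs.
From mathcomp Require Import all_boot all_fingroup all_solvable all_algebra.
From mathcomp Require Import zify.
Set Implicit Arguments. Unset Strict Implicit. Unset Printing Implicit Defensive.
Import GRing.Theory.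

Local Open Scope ring_scope.
Section Binom.
Variables (V : zmodType) (f : V -> V).
Hypothesis fD : {morph f : x y / x + y}.
Lemma f0 : f 0 = 0.
Proof. by apply: (addrI (f 0)); rewrite -fD !addr0. Qed.
Lemma fsum I (r : seq I) P (F : I -> V) :
  f (\sum_(i <- r | P i) F i) = \sum_(i <- r | P i) f (F i).
Proof. exact: (big_morph f fD f0). Qed.
Lemma fMn x n : f (x *+ n) = f x *+ n.
Proof. by elim: n => [|n IH]; rewrite ?f0 // !mulrS fD IH. Qed.
Lemma iter_morphD j : {morph iter j f : x y / x + y}.
Proof. by elim: j => [|j IH] x y //=; rewrite IH fD. Qed.
Lemma iter0 j : iter j f 0 = 0.
Proof. by elim: j => [|j IH] //=; rewrite IH f0. Qed.

Lemma binom_iter x i :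
  iter i (fun y => f y + y) x = \sum_(j < i.+1) iter j f x *+ 'C(i, j).
Proof.
elim: i => [|i IH]; first by rewrite big_ord_recl big_ord0 /= addr0.
rewrite iterS IH fsum -big_split /= big_split /=.
have -> : \sum_(j < i.+2) iter j f x *+ 'C(i.+1, j) = x +
   \sum_(j < i.+1) (iter j.+1 f x *+ 'C(i, j) + iter j.+1 f x *+ 'C(i, j.+1)).
  rewrite big_ord_recl /= mulr1n; congr (_ + _); apply: eq_bigr => j _.
  by rewrite /bump /= (_ : (0 + j)%N = j) // (_ : (1 + j)%N = j.+1) // binS mulrnDr addrC.
rewrite big_split /=.
have -> : \sum_(j < i.+1) f (iter j f x *+ 'C(i, j)) =
          \sum_(j < i.+1) iter j.+1 f x *+ 'C(i, j).
  by apply: eq_bigr => j _; rewrite fMn.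
have -> : \sum_(j < i.+1) iter j f x *+ 'C(i, j) =
          x + \sum_(j < i) iter j.+1 f x *+ 'C(i, j.+1).
  by rewrite big_ord_recl /= bin0 mulr1n.
have -> : \sum_(j < i.+1) iter j.+1 f x *+ 'C(i, j.+1) =
          \sum_(j < i) iter j.+1 f x *+ 'C(i, j.+1).
  by rewrite big_ord_recr /= bin_small // mulr0n addr0.
by rewrite addrCA.
Qed.
Lemma sum_iter x m :
  \sum_(i < m) iter i (fun y => f y + y) x = \sum_(j < m) iter j f x *+ 'C(m, j.+1).
Proof.
elim: m => [|m IH]; first by rewrite !big_ord0.
rewrite big_ord_recr /= IH binom_iter.
have -> : \sum_(j < m.+1) iter j f x *+ 'C(m.+1, j.+1) =
  \sum_(j < m.+1) iter j f x *+ 'C(m, j.+1) + \sum_(j < m.+1) iter j f x *+ 'C(m, j).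
  by rewrite -big_split; apply: eq_bigr => j _; rewrite binS mulrnDr.
by rewrite [X in _ = X + _]big_ord_recr /= bin_small // mulr0n addr0.
Qed.
Lemma sum_ends n (F : nat -> V) : (0 < n)%N ->
  (forall j, (0 < j < n)%N -> F j = 0) -> \sum_(j < n.+1) F j = F 0%N + F n.
Proof.
move=> n0 H; rewrite big_ord_recr /=; case: n n0 H => // n _ H.
rewrite big_ord_recl big1 ?addr0 // => j _; apply: H; rewrite /= ltnS ltn_ord.
by rewrite /bump /=.
Qed.
Lemma sum_last m (F : nat -> V) : (0 < m)%N ->
  (forall j, (j < m.-1)%N -> F j = 0) -> \sum_(j < m) F j = F m.-1.
Proof.
by case: m => // m _ H; rewrite big_ord_recr /= big1 ?add0r // => j _; apply: H.
Qed.
End Binom.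

Lemma pow_big p r : (2 < p)%N -> (2 <= r)%N -> (r < p ^ r.-1)%N.
Proof.
move=> p3; case: r => // [] [] // k _; elim: k => [|k IH] /=; first by rewrite expn1.
rewrite expnS; move: IH; set q := (p ^ k.+1)%N => IH; nia.
Qed.

Lemma dvd_bin_pow p k j : prime p -> (0 < j < p ^ k)%N -> (p %| 'C(p ^ k, j))%N.
Proof.
move=> pp /andP[]; case: j => // m _ lt.
have H : (p ^ k %| m.+1 * 'C(p ^ k, m.+1))%N by rewrite -mul_bin_diag dvdn_mulr.
apply/negPn/negP => nd.
have cop : coprime (p ^ k) 'C(p ^ k, m.+1) by rewrite coprimeXl // prime_coprime.
move: H; rewrite Gauss_dvdl // => /dvdn_leq => /(_ isT).
by rewrite leqNgt lt.
Qed.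

Local Close Scope ring_scope.
Section Brace.
Variables (gT : finGroupType) (add : gT -> gT -> gT) (opp : gT -> gT) (zero : gT).
Hypothesis hb : is_left_brace add opp zero.
Definition addZ : Type := gT.
HB.instance Definition _ := Finite.on addZ.
Let addA : associative (add : addZ -> addZ -> addZ). Proof. by case: hb => h ????; move=> ???; apply: h. Qed.
Let addC : commutative (add : addZ -> addZ -> addZ). Proof. by case: hb. Qed.
Let add0 : left_id (zero : addZ) add. Proof. by case: hb. Qed.
Let addN : left_inverse (zero : addZ) opp add. Proof. by case: hb. Qed.
HB.instance Definition _ := GRing.isZmodule.Build addZ addA addC add0 addN.
HB.instance Definition _ := [finGroupMixin of addZ for +%R].

Local Open Scope ring_scope.
Definition mul (a b : addZ) : addZ := @mulg gT a b.
Definition one : addZ := @oneg gT.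

Lemma mulD a x y : mul a (x + y) = mul a x - a + mul a y.
Proof. by case: hb => ????; apply. Qed.

Definition lam a x := - a + mul a x.
Lemma mul_lam a x : mul a x = a + lam a x.
Proof. by rewrite /lam addrA addrN add0r. Qed.
Lemma lamD a : {morph lam a : x y / x + y}.
Proof. by move=> x y; rewrite /lam mulD !addrA. Qed.
Lemma lam0 a : lam a 0 = 0.
Proof. by apply: (addrI (lam a 0)); rewrite -lamD !addr0. Qed.
Lemma lamMn a x n : lam a (x *+ n) = lam a x *+ n.
Proof. elim: n => [|n IH]; by rewrite ?lam0 // !mulrS lamD IH. Qed.
Lemma lamN a x : lam a (- x) = - lam a x.
Proof. by apply: (addrI (lam a x)); rewrite -lamD !subrr lam0. Qed.
Lemma lam_sum a I (r : seq I) P (F : I -> addZ) :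
  lam a (\sum_(i <- r | P i) F i) = \sum_(i <- r | P i) lam a (F i).
Proof. exact: (big_morph (lam a) (lamD a) (lam0 a)). Qed.

Lemma mul0 a : mul a 0 = a.
Proof.
have E := mulD a 0 0; rewrite addr0 in E.
have : 0 + mul a 0 = (mul a 0 - a) + mul a 0 by rewrite add0r.
by move/addIr/eqP; rewrite eq_sym subr_eq0 => /eqP.
Qed.
Lemma zero_one : (0 : addZ) = one.
Proof. by have := mul0 one; rewrite /mul mul1g. Qed.
Lemma lamM a b x : lam (mul a b) x = lam a (lam b x).
Proof.
have E : mul (mul a b) x = mul a (mul b x) by rewrite /mul mulgA.
move: E; rewrite (mul_lam (mul a b) x) (mul_lam b x) mulD (mul_lam a (lam b x)).
by rewrite -[mul a b - a + _]addrA addKr => /addrI.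
Qed.
Lemma lam1 x : lam one x = x.
Proof. by rewrite /lam /mul mul1g -zero_one oppr0 add0r. Qed.
Lemma expS_sum (a : addZ) m : (@expgn gT a m : addZ) = \sum_(i < m) iter i (lam a) a.
Proof.
elim: m => [|m IH]; first by rewrite expg0 big_ord0 zero_one.
rewrite expgS big_ord_recl /=.
change (mul a (@expgn gT a m) = a + \sum_(i < m) lam a (iter (0 + i) (lam a) a)).
by rewrite mul_lam IH lam_sum.
Qed.
Lemma lamX a n x : lam (@expgn gT a n) x = iter n (lam a) x.
Proof.
elim: n x => [|n IH] x /=; first by rewrite expg0 lam1.
by rewrite expgS (lamM a) IH.
Qed.

Section Om.
Variable p : nat.
Hypothesis pp : prime p.
Definition OmZ : {set addZ} := [set x : addZ | x *+ p == 0].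
Lemma Om0 : 0 \in OmZ. Proof. by rewrite inE mul0rn. Qed.
Lemma OmD x y : x \in OmZ -> y \in OmZ -> x + y \in OmZ.
Proof. by rewrite !inE mulrnDl => /eqP-> /eqP->; rewrite addr0. Qed.
Lemma OmN x : x \in OmZ -> - x \in OmZ.
Proof. by rewrite !inE mulNrn => /eqP->; rewrite oppr0. Qed.
Lemma Omlam a x : x \in OmZ -> lam a x \in OmZ.
Proof. by rewrite !inE -lamMn => /eqP->; rewrite lam0. Qed.
Lemma Ommul x y : x \in OmZ -> y \in OmZ -> mul x y \in OmZ.
Proof. by move=> *; rewrite mul_lam OmD ?Omlam. Qed.
Lemma Ommn y n : y \in OmZ -> (p %| n)%N -> y *+ n = 0.
Proof. by rewrite inE => /eqP yp /dvdnP[q ->]; rewrite mulnC mulrnA yp mul0rn. Qed.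
Lemma expZ (x : addZ) n : (x ^+ n)%g = x *+ n.
Proof. by elim: n => // n IH; rewrite expgS IH mulrS. Qed.
Lemma OmZ_gs : group_set OmZ.
Proof. by apply/group_setP; split; [exact: Om0 | move=> x y; exact: OmD]. Qed.
Canonical OmZ_group := Group OmZ_gs.
Lemma OmZ_pgroup : pgroup p OmZ.
Proof.
rewrite -pnat_exponent; apply: (@pnat_dvd _ p); last exact: pnat_id.
by apply/exponentP => x; rewrite inE expZ => /eqP->.
Qed.
Definition OmG : {set gT} := [set x : gT | (x : addZ) \in OmZ].
Lemma OmGE x : (x \in OmG) = ((x : addZ) \in OmZ).
Proof. by rewrite /OmG in_set. Qed.
Lemma OmG_gs : group_set OmG.
Proof.
apply/group_setP; split; first by rewrite OmGE; have := Om0; rewrite zero_one.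
by move=> x y; rewrite !OmGE; exact: Ommul.
Qed.
Canonical OmG_group := Group OmG_gs.
Lemma cardOm : #|OmG| = #|OmZ|.
Proof. by rewrite !cardsE. Qed.

Lemma iter_Om (g : addZ -> addZ) j x :
  (forall y, y \in OmZ -> g y \in OmZ) -> x \in OmZ -> iter j g x \in OmZ.
Proof. by move=> H; elim: j => // j IH Hx /=; apply: H; apply: IH. Qed.

Section Chain.
Variable f : addZ -> addZ.
Hypothesis fD : {morph f : x y / x + y}.
Hypothesis fOm : forall x, x \in OmZ -> f x \in OmZ.
Variable K : nat.
Hypothesis fK : forall x, x \in OmZ -> iter K f x = 0.

Definition II j : {set addZ} := [set iter j f y | y in OmZ].
Lemma II_gs j : group_set (II j).
Proof.
apply/group_setP; split.
  by apply/imsetP; exists 0; [exact: Om0 | rewrite (iter0 fD)].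
move=> _ _ /imsetP[x Hx ->] /imsetP[y Hy ->]; apply/imsetP; exists (x + y).
  exact: OmD.
by rewrite (iter_morphD fD).
Qed.
Lemma II0 : II 0 = OmZ.
Proof. by apply/setP => x; apply/imsetP/idP => [[y Hy ->] // | Hx]; exists x. Qed.
Lemma IIS j : II j.+1 = [set f x | x in II j].
Proof.
apply/setP => x; apply/imsetP/imsetP => [[y Hy ->] | [z /imsetP[y Hy ->] ->]].
  by exists (iter j f y) => //; apply/imsetP; exists y.
by exists y.
Qed.
Lemma II_sub j : II j.+1 \subset II j.
Proof.
apply/subsetP => _ /imsetP[y Hy ->]; apply/imsetP; exists (f y); first exact: fOm.
by rewrite iterSr.
Qed.
Lemma II_subn m n : (m <= n)%N -> II n \subset II m.
Proof.
move/subnK <-; elim: (n - m)%N => [|k IH] //.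
by rewrite addSn; apply: subset_trans (II_sub _) IH.
Qed.
Lemma II_stable j k : II j = II j.+1 -> II (j + k) = II j.
Proof.
move=> E; elim: k => [|k IH]; first by rewrite addn0.
by rewrite addnS IIS IH -IIS.
Qed.
Lemma II0in j : 0 \in II j.
Proof. by apply/imsetP; exists 0; [exact: Om0 | rewrite (iter0 fD)]. Qed.
Lemma IIK : II K \subset [set 0].
Proof. by apply/subsetP => _ /imsetP[y Hy ->]; rewrite fK ?set11. Qed.

Lemma II_card j : II j = [set 0] \/ (p ^ j * #|II j| <= #|OmZ|)%N.
Proof.
elim: j => [|j IH]; first by right; rewrite II0 mul1n.
have [E|NE] := eqVneq (II j.+1) [set 0]; first by left.
right; case: IH => [Ej|IH].
  move/eqP: NE => NE; case: NE; apply/eqP; rewrite eqEsubset sub1set II0in andbT.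
  by rewrite -Ej II_sub.
have NEq : II j.+1 != II j.
  apply/eqP => Eq; move/eqP: NE => NE; case: NE; apply/eqP.
  rewrite eqEsubset sub1set II0in andbT.
  have := II_stable K (esym Eq); rewrite -Eq => St.
  apply: subset_trans IIK; rewrite -St; apply: II_subn; exact: leq_addl.
have pr : II j.+1 \proper II j by rewrite properEneq NEq II_sub.
pose G1 := Group (II_gs j.+1); pose G0 := Group (II_gs j).
have p0 : pgroup p G0.
  by apply: pgroupS OmZ_pgroup; rewrite /= -II0 II_subn.
have p1 : pgroup p G1.
  by apply: pgroupS OmZ_pgroup; rewrite /= -II0 II_subn.
have c0 := card_pgroup p0; have c1 := card_pgroup p1.
have p1lt : (1 < p)%N by apply: prime_gt1.
have lt := proper_card pr.
have : (p * #|II j.+1| <= #|II j|)%N.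
  move: lt; rewrite /= in c0 c1; rewrite c0 c1 ltn_exp2l // => lt.
  by rewrite -expnS leq_exp2l.
move=> le; rewrite expnS -mulnA; apply: leq_trans IH.
by rewrite mulnCA leq_mul2l le orbT.
Qed.

Lemma nil_r x : x \in OmZ -> iter (logn p #|OmZ|) f x = 0.
Proof.
move=> Hx.
have E : II (logn p #|OmZ|) = [set 0].
  case: (II_card (logn p #|OmZ|)) => // le.
  apply/eqP; rewrite eq_sym eqEcard sub1set II0in cards1 /=.
  move: le; rewrite -(card_pgroup OmZ_pgroup) /= => le.
  have cp : (0 < #|OmZ|)%N by apply/card_gt0P; exists 0; exact: Om0.
  by rewrite -(leq_pmul2l cp) muln1.
have : iter (logn p #|OmZ|) f x \in II (logn p #|OmZ|) by apply/imsetP; exists x.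
by rewrite E inE => /eqP.
Qed.
End Chain.
End Om.

Definition Nm a (x : addZ) : addZ := lam a x - x.
Lemma NmD a : {morph Nm a : x y / x + y}.
Proof. by move=> x y; rewrite /Nm lamD opprD addrACA. Qed.
Lemma lamNm a x : lam a x = Nm a x + x.
Proof. by rewrite /Nm subrK. Qed.
Lemma OmNm p a x : x \in OmZ p -> Nm a x \in OmZ p.
Proof. by move=> Hx; rewrite /Nm OmD ?OmN ?Omlam. Qed.

Section Cyc.
Hypothesis oddG : odd #|gT|.
Hypothesis zg : Zgroup [set: gT].

Lemma Om_small p : prime p -> (logn p #|OmZ p| <= 1)%N.
Proof.
move=> pp; set r := logn p #|OmZ p|.
rewrite leqNgt; apply/negP => r2.
have pg : pgroup p (OmG_group p) by rewrite /pgroup /= cardOm; exact: OmZ_pgroup.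
have cOm : cyclic (OmG p).
  have [P sylP sub] := Sylow_superset (subsetT (OmG_group p)) pg.
  apply: cyclicS sub _; apply: (forall_inP zg); apply/SylowP; exists p => //.
have cardO : #|OmG p| = (p ^ r)%N by rewrite cardOm (card_pgroup (OmZ_pgroup pp)).
have p3 : (2 < p)%N.
  have : (p %| #|gT|)%N.
    apply: dvdn_trans (_ : p %| #|OmG p|)%N _.
      by rewrite cardO dvdn_exp // ltnW.
    by rewrite -cardsT cardSg ?subsetT.
  case: p pp {r r2 pg cOm cardO} => [|[|[|p]]] //= _.
  by rewrite dvdn2 oddG.
have key : forall a, a \in OmG p -> (a ^+ (p ^ r.-1) = 1)%g.
  move=> a Ha; have Ha' : (a : addZ) \in OmZ p by rewrite -OmGE.
  have nilK : forall x, x \in OmZ p -> iter (p ^ r) (Nm a) x = 0.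
    move=> x Hx.
    have E1 : iter (p ^ r) (lam a) x = x.
      by rewrite -lamX -cardO (expg_cardG (G := OmG_group p) Ha) lam1.
    rewrite (eq_iter (lamNm a)) (binom_iter (NmD a)) (sum_ends (F := fun j => iter j (Nm a) x *+ 'C(p ^ r, j))) in E1.
    - move: E1; rewrite bin0 binn !mulr1n /=.
      by move/(congr1 (fun z => z - x)) => /=; rewrite addrAC !subrr add0r.
    - by rewrite expn_gt0 prime_gt0.
    move=> j /andP[j0 jlt]; apply: (@Ommn p); last by apply: dvd_bin_pow => //; rewrite j0 jlt.
    by apply: iter_Om => // y; exact: OmNm.
  have nilr := nil_r pp (NmD a) (@OmNm p a) nilK.
  have m0 : (0 < p ^ r.-1)%N by rewrite expn_gt0 prime_gt0.
  apply/eqP; rewrite -[X in _ == X]zero_one; apply/eqP.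
  rewrite expS_sum (eq_bigr (fun i : 'I_(p ^ r.-1) => iter i (fun y => Nm a y + y) a)).
    2: by move=> i _; rewrite (eq_iter (lamNm a)).
  rewrite (sum_iter (NmD a)) (sum_last (F := fun j => iter j (Nm a) a *+ 'C(p ^ r.-1, j.+1))) //.
    rewrite prednK // binn mulr1n.
    have le : (r <= (p ^ r.-1).-1)%N by rewrite -ltnS prednK // pow_big.
    by rewrite -(subnK le) iterD nilr // (iter0 (NmD a)).
  move=> j jlt; apply: (@Ommn p); first by apply: iter_Om => // y; exact: OmNm.
  apply: dvd_bin_pow => //; rewrite ltnS /=.
  by rewrite -(prednK m0) ltnS.
have : (exponent (OmG p) %| p ^ r.-1)%N by apply/exponentP.
rewrite exponent_cyclic // cardO dvdn_Pexp2l ?prime_gt1 //.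
move: r2; clearbody r; lia.
Qed.

Lemma brace_cyclic : add_cyclic add zero.
Proof.
have ab : abelian [set: addZ] by apply/centsP => x _ y _; exact: addrC.
have cyc : cyclic [set: addZ].
  rewrite abelian_rank1_cyclic //; have [p pp ->] := rank_witness [set: addZ].
  have [E] := p_rank_witness p [set: addZ].
  case/pnElemP => _ /and3P[_ _ eE] <-.
  apply: leq_trans (Om_small pp); apply: dvdn_leq_log; first exact: cardG_gt0.
  apply: (@cardSg _ (OmZ_group p)); apply/subsetP => x Ex.
  by rewrite inE -expZ; move/exponentP: eE => ->.
have [c Ec] := cyclicP cyc.
exists c => a; have : a \in <[c]>%g by rewrite -Ec inE.
case/cycleP => i ->; exists i; rewrite expZ.
by elim: i => // i IH; rewrite mulrS IH.
Qed.
End Cyc.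
End Brace.

Local Open Scope group_scope.
Section CS.
Variables (X : finType) (op : X -> X -> X).
Hypothesis cs : is_cycle_set op.

Lemma opinj x : injective (op x).
Proof. by case: cs => H _ _; exact: bij_inj (H x). Qed.
Definition sgm x : {perm X} := perm (@opinj x).
Lemma sigE x y : sgm x y = op x y.
Proof. by rewrite permE. Qed.
Definition GG : {group {perm X}} := <<sigma_set op>>%G.
Lemma sig_in x : sgm x \in GG.
Proof.
apply: mem_gen; rewrite inE; apply/existsP; exists x; apply/forallP => y.
by rewrite sigE.
Qed.

Definition stepF (s : {perm X}) (b : X) := s * sgm (s b).
Definition FF (w : seq X) := foldl stepF 1 w.

Lemma foldl_step p v : foldl stepF p v = p * FF (map p v).
Proof.
elim/last_ind: v => [|v b IH]; first by rewrite /FF /= mulg1.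
by rewrite map_rcons /FF !foldl_rcons -/(FF _) IH /stepF -/(FF _) permM mulgA.
Qed.
Lemma F_cat w v : FF (w ++ v) = FF w * FF (map (FF w) v).
Proof. by rewrite /FF foldl_cat foldl_step. Qed.
Lemma F1 x : FF [:: x] = sgm x.
Proof. by rewrite /FF /= /stepF mul1g perm1. Qed.
Lemma F_rcons w b : FF (rcons w b) = FF w * sgm (FF w b).
Proof. by rewrite -cats1 F_cat /= F1. Qed.
Lemma F_in w : FF w \in GG.
Proof.
elim/last_ind: w => [|w b IH]; first exact: group1.
by rewrite F_rcons groupM // sig_in.
Qed.
Lemma F_swap2 a b : FF [:: a; b] = FF [:: b; a].
Proof.
apply/permP => z; rewrite /FF /= /stepF !mul1g !perm1 !permM !sigE.
by case: cs => _ H _; rewrite H.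
Qed.
Lemma F_swap u a b v : FF (u ++ a :: b :: v) = FF (u ++ b :: a :: v).
Proof.
rewrite !F_cat /= -[_ :: _ :: _]cat0s -[_ :: map _ v](cat0s).
rewrite -[FF u a :: _](cat1s) -[FF u b :: _](cat1s) !catA.
by rewrite (F_cat [:: _; _]) (F_cat [:: FF u b; _]) F_swap2.
Qed.
Lemma F_front u w a v : FF (u ++ w ++ a :: v) = FF (u ++ a :: w ++ v).
Proof.
elim: w u => [|c w IH] u //=.
by rewrite -cat_rcons IH cat_rcons F_swap.
Qed.
Lemma F_perm u s t : perm_eq s t -> FF (u ++ s) = FF (u ++ t).
Proof.
elim: s u t => [|a s IH] u t pst.
  by move: (perm_size pst); case: t pst.
have a_t : a \in t by rewrite -(perm_mem pst) mem_head.
move: pst; case/splitPr: a_t => t1 t2 pst.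
have pst' : perm_eq s (t1 ++ t2).
  rewrite -(perm_cons a); apply: perm_trans pst _.
  by rewrite -cat1s perm_catCA.
by rewrite -cat_rcons (IH _ _ pst') cat_rcons F_front.
Qed.
Lemma F_catC w v : FF (w ++ v) = FF (v ++ w).
Proof. by have := @F_perm [::] (w ++ v) (v ++ w); apply; rewrite perm_catC. Qed.
Lemma Fcat_eq w w' v v' : FF w = FF w' -> FF v = FF v' -> FF (w ++ v) = FF (w' ++ v').
Proof.
by move=> Ew Ev; rewrite F_cat Ew -F_cat F_catC F_cat Ev -F_cat F_catC.
Qed.

Lemma F_surj s : s \in GG -> exists w, FF w = s.
Proof.
case/gen_prodgP => n [c Hc ->].
elim: n c Hc => [|n IH] c Hc; first by exists [::]; rewrite big_ord0.
rewrite big_ord_recr /=.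
have [w Ew] := IH (fun i => c (widen_ord (leqnSn n) i)) (fun i => Hc _).
have : c ord_max \in sigma_set op := Hc ord_max.
rewrite inE => /existsP[x /forallP Hx].
have Ec : c ord_max = sgm x by apply/permP => y; rewrite sigE (eqP (Hx y)).
by exists (rcons w ((FF w)^-1 x)); rewrite F_rcons Ew Ec permKV.
Qed.

Definition wordP (s : {perm X}) (w : seq X) := (FF w == s) || (s \notin GG).
Lemma wordE s : exists w, wordP s w.
Proof.
case: (boolP (s \in GG)) => H.
  by have [w Ew] := F_surj H; exists w; rewrite /wordP Ew eqxx.
by exists [::]; rewrite /wordP H orbT.
Qed.
Definition word s := xchoose (wordE s).
Lemma F_word s : s \in GG -> FF (word s) = s.
Proof. by move=> H; have := xchooseP (wordE s); rewrite /wordP => /orP[/eqP //|]; rewrite H. Qed.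

Definition BB := subg_of GG.
Definition W (u : BB) := word (sgval u).
Lemma FW u : FF (W u) = sgval u.
Proof. exact: F_word (subgP u). Qed.
Definition addB (u v : BB) : BB := subg GG (FF (W u ++ W v)).
Definition oppB (u : BB) : BB := subg GG (FF (map (sgval u)^-1 (W u^-1))).
Lemma sgF w : sgval (subg GG (FF w)) = FF w.
Proof. exact: subgK (F_in w). Qed.
Lemma addBE u v w w' : FF w = sgval u -> FF w' = sgval v -> sgval (addB u v) = FF (w ++ w').
Proof. by move=> Ew Ew'; rewrite sgF; apply: Fcat_eq; rewrite FW. Qed.
Lemma mapKV (s : {perm X}) l : map s (map s^-1 l) = l.
Proof. by rewrite -map_comp; elim: l => //= x l ->; rewrite permKV. Qed.
Lemma keyM (a : {perm X}) w : FF (word a) = a -> a * FF w = FF (word a ++ map a^-1 w).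
Proof. by move=> Ea; rewrite F_cat Ea mapKV. Qed.

Lemma addBA : associative addB.
Proof.
move=> u v w; apply: subg_inj.
rewrite (@addBE u (addB v w) (W u) (W v ++ W w)) ?FW //; last by rewrite (addBE (FW v) (FW w)).
rewrite (@addBE (addB u v) w (W u ++ W v) (W w)) ?FW ?catA //.
by rewrite (addBE (FW u) (FW v)).
Qed.
Lemma addBC : commutative addB.
Proof. by move=> u v; apply: subg_inj; rewrite !sgF F_catC. Qed.
Lemma add0B : left_id 1 addB.
Proof. by move=> u; apply: subg_inj; rewrite (@addBE 1 u [::] (W u)) ?FW. Qed.
Lemma addNB : left_inverse 1 oppB addB.
Proof.
move=> u; apply: subg_inj; rewrite addBC.
rewrite (@addBE u (oppB u) (W u) (map (sgval u)^-1 (W u^-1))) ?FW ?sgF //.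
by rewrite F_cat FW mapKV FW /= mulgV.
Qed.
Lemma mulB_lam (a u : BB) : sgval (a * u) = FF (W a ++ map (sgval a)^-1 (W u)).
Proof. by rewrite -keyM ?FW. Qed.
Lemma distr_aux (a b c : BB) : addB (a * addB b c) a = addB (a * b) (a * c).
Proof.
apply: subg_inj.
rewrite (@addBE _ _ (W a ++ map (sgval a)^-1 (W b ++ W c)) (W a)) ?FW //; last first.
  by rewrite -keyM ?FW // /= (addBE (FW b) (FW c)).
rewrite (@addBE _ _ (W a ++ map (sgval a)^-1 (W b)) (W a ++ map (sgval a)^-1 (W c))); last 2 first.
- by rewrite mulB_lam.
- by rewrite mulB_lam.
rewrite map_cat -!catA; apply: F_perm; by rewrite perm_cat2l perm_catC.
Qed.

Lemma brace : is_left_brace addB oppB 1.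
Proof.
split; [exact: addBA | exact: addBC | exact: add0B | exact: addNB |].
move=> a b c.
rewrite -(addBA (a * b)) (addBC (oppB a)) addBA -distr_aux -addBA (addBC a) addNB.
by rewrite (addBC _ 1) add0B.
Qed.

Hypothesis uc : uniconnected op.
Variable e : X.
Definition g0 : BB := subg GG (sgm e).

Lemma uc_uniq x y s t : s \in GG -> t \in GG -> s x = y -> t x = y -> s = t.
Proof.
move=> sG tG sx tx; case: (uc x y) => s0 [_ U].
by rewrite -(U s) ?(U t).
Qed.
Lemma sgsig x : sgval (subg GG (sgm x)) = sgm x.
Proof. exact: subgK (sig_in x). Qed.

Lemma blamE (a : BB) : blam addB oppB a g0 = subg GG (sgm ((sgval a)^-1 e)).
Proof.
have E : a * g0 = addB a (subg GG (sgm ((sgval a)^-1 e))).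
  apply: subg_inj; rewrite (@addBE a _ (W a) [:: (sgval a)^-1 e]) ?FW ?F1 ?sgsig //.
  by rewrite -[[:: _]]/(map (sgval a)^-1 [:: e]) -keyM ?FW // F1 /= sgsig.
by rewrite /blam E addBA addNB add0B.
Qed.

Lemma gen_base : in_trans_cycle_base addB oppB 1 g0.
Proof.
move=> H H0 HD _ sub; apply/setP => u; rewrite inE.
have -> : u = subg GG (FF (W u)) by apply: subg_inj; rewrite sgF FW.
elim/last_ind: (W u) => [|w b IH].
  by rewrite (_ : subg GG (FF [::]) = 1) //; apply: subg_inj; rewrite sgF.
have -> : subg GG (FF (rcons w b)) = addB (subg GG (FF w)) (subg GG (sgm b)).
  by apply: subg_inj; rewrite (@addBE _ _ w [:: b]) ?sgF ?F1 ?sgsig ?cats1.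
apply: HD => //; apply: (subsetP sub).
case: (uc b e) => s [[sG sb] _].
apply/imsetP; exists (subg GG s) => //; rewrite blamE subgK //.
by rewrite -sb permK.
Qed.

Lemma sx_ex x : exists s : {perm X}, (s \in GG) && (s x == e).
Proof. by case: (uc x e) => s [[sG sx] _]; exists s; rewrite sG sx eqxx. Qed.
Definition sx x := xchoose (sx_ex x).
Lemma sxG x : sx x \in GG.
Proof. by case/andP: (xchooseP (sx_ex x)). Qed.
Lemma sxx x : sx x x = e.
Proof. by case/andP: (xchooseP (sx_ex x)) => _ /eqP. Qed.
Definition fX x : BB := subg GG (sx x).
Lemma f_bij : bijective fX.
Proof.
exists (fun u : BB => (sgval u)^-1 e) => [x | u].
  by rewrite /fX subgK ?sxG // -(sxx x) permK.
apply: subg_inj; rewrite /fX subgK ?sxG //.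
apply: (@uc_uniq ((sgval u)^-1 e) e) => //; [exact: sxG | exact: subgP | exact: sxx | ].
by rewrite permKV.
Qed.
Lemma f_op x y : fX (op x y) = assoc_op addB oppB g0 (fX x) (fX y).
Proof.
rewrite /assoc_op blamE /fX subgK ?sxG // -(sxx x) permK.
apply: subg_inj; rewrite subgK ?sxG //=.
rewrite sgsig; apply: (@uc_uniq (op x y) e) => //.
- exact: sxG.
- by rewrite subgK ?sxG // groupM ?groupV ?sxG ?sig_in.
- exact: sxx.
by rewrite subgK ?sxG // permM -sigE permK sxx.
Qed.
End CS.

Section P1.
Variable gT : finGroupType.
Definition lmul (h : gT) : {perm gT} := perm (mulgI h^-1).
Lemma lmulM : {in [set: gT] &, {morph lmul : x y / x * y}}.
Proof. move=> x y _ _; apply/permP=> z; by rewrite permM !permE /= invMg mulgA. Qed.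
Canonical lmul_morph := Morphism lmulM.

Lemma part1 (add : gT -> gT -> gT) opp (g : gT) :
  Zgroup [set: gT] -> Zgroup (permG (assoc_op add opp g)).
Proof.
move=> zg.
rewrite /permG. set S := [set blam add opp a g | a in gT].
have -> : sigma_set (assoc_op add opp g) = lmul @* S.
  apply/setP=> s; rewrite inE (morphimEsub _ (subsetT S)); apply/existsP/imsetP.
    case=> x /forallP H; exists (blam add opp x g); first by apply: imset_f.
    apply/permP=> y; by rewrite (eqP (H y)) permE.
  case=> h /imsetP[a _ ->] ->; exists a; apply/forallP=> y.
  by rewrite permE.
rewrite -morphim_gen ?subsetT //.
by apply: morphim_Zgroup; apply: ZgroupS zg; apply: subsetT.
Qed.
End P1.

Theorem mainTheorem11 :
  (forall (gT : finGroupType) (add : gT -> gT -> gT) (opp : gT -> gT) (zero : gT),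
     is_left_brace add opp zero ->
     odd #|gT| -> add_cyclic add zero -> Zgroup [set: gT] ->
     forall g : gT, in_trans_cycle_base add opp zero g ->
       odd #|gT| /\ Zgroup (permG (assoc_op add opp g)))
  /\
  (forall (X : finType) (op : X -> X -> X),
     is_cycle_set op -> uniconnected op -> odd #|X| -> Zgroup (permG op) ->
     exists (gT : finGroupType) (add : gT -> gT -> gT) (opp : gT -> gT) (zero : gT),
       [/\ is_left_brace add opp zero, odd #|gT|, add_cyclic add zero,
           Zgroup [set: gT] &
       exists g : gT, in_trans_cycle_base add opp zero g /\
         exists f : X -> gT, bijective f /\
           forall x y : X, f (op x y) = assoc_op add opp g (f x) (f y)]).
Proof.
split.
  move=> gT add opp zero hb oddG _ zg g _; split => //; exact: part1.
move=> X op cs uc oddX zg.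
have /card_gt0P[e _] : (0 < #|X|)%N by move: oddX; case: #|X|.
have oddB : odd #|BB op| by rewrite -(bij_eq_card (f_bij uc e)).
have zgB : Zgroup [set: BB op].
  by rewrite -im_subg; apply: morphim_Zgroup; exact: zg.
exists (BB op), (addB cs), (oppB cs), 1; split => //.
- exact: brace.
- exact: (brace_cyclic (brace cs) oddB zgB).
exists (g0 cs e); split; first exact: (gen_base uc).
exists (fX uc e); split; first exact: f_bij.
exact: f_op.
Qed.
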